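(* Let $G_1$ be the graph constructed as follows: take a star with centre $c$ and leaves $v_1,v_2,v_3,v_4$, and for each $i\in\{1,2,3,4\}$ take a copy $S_i$ of $S$ in which the vertex $a$ is identified with $c$ and the vertex $b$ is identified with $v_i$ (so the edge $ab$ of $S_i$ is the edge $cv_i$), the copies $S_1,\dots,S_4$ being otherwise vertex-disjoint. Then for every subgraph $H$ of $G_1$ with maximum degree $\Delta(H)\le 3$, the graph $G_1-E(H)$ is not $3$-choosable.
   Context: $J_3$ is the graph with vertex set $\{a,b,c,d,e,f,g,h,i,j,k\}$ and edges $ab$; $ac,ad,ae,af,ag$; $bc,bd,be,bf,bg$; $cd,de,ef,fg$; $ha,hd,he$; $ia,ie,if$; $jb,jd,je$; $kb,ke,kf$. $S$ is the graph obtained from nine pairwise vertex-disjoint copies of $J_3$ by identifying all copies of $a$ into a single vertex $a$ and all copies of $b$ into a single vertex $b$, all other vertices staying distinct. A graph is $3$-choosable if for every assignment of a list of $3$ colours to each vertex there is a proper colouring choosing each vertex's colour from its list. (The resulting graph $G_1$ is planar.) *)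

(* Defs.v *)
From mathcomp Require Import all_boot.
Set Implicit Arguments. Unset Strict Implicit. Unset Printing Implicit Defensive.

Definition choosable (T : finType) (e : rel T) (k : nat) : Prop :=
  forall L : T -> seq nat,
    (forall v, uniq (L v) /\ size (L v) = k) ->
    exists col : T -> nat,
      (forall v, col v \in L v) /\ (forall u v, e u v -> col u != col v).

Definition del_edges (T : finType) (e h : rel T) : rel T :=
  fun x y => e x y && ~~ h x y.

Definition subgraph_maxdeg (T : finType) (e h : rel T) (d : nat) : Prop :=
  (forall x y, h x y = h y x) /\
  (forall x y, h x y -> e x y) /\
  (forall x, #|[set y | h x y]| <= d).

(* Vertices of J_3 are labelled by 'I_11 :
   a=0, b=1, c=2, d=3, e=4, f=5, g=6, h=7, i=8, j=9, k=10. *)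
Definition J3_edges : seq (nat * nat) :=
  [:: (0,1);
      (0,2); (0,3); (0,4); (0,5); (0,6);
      (1,2); (1,3); (1,4); (1,5); (1,6);
      (2,3); (3,4); (4,5); (5,6);
      (7,0); (7,3); (7,4);
      (8,0); (8,4); (8,5);
      (9,1); (9,3); (9,4);
      (10,1); (10,4); (10,5)].

(* Vertex set:
     None                      = the centre c
     Some (i, None)            = the leaf v_i   (i : 'I_4)
     Some (i, Some (j, x))     = vertex with J_3-label x+2 (i.e. one of
                                 c,d,...,k of J_3) in the j-th copy
                                 (j : 'I_9) of J_3 inside S_i. *)
Definition G1V : finType := option ('I_4 * option ('I_9 * 'I_9)).

Definition G1_lift (i : 'I_4) (j : 'I_9) (x : nat) : G1V :=
  if x == 0 then None
  else if x == 1 then Some (i, None)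
  else Some (i, Some (j, inord (x - 2))).

(* Adjacency of G_1: u ~ v iff for some i, j, some edge pq of J_3 is
   mapped onto {u, v}.  (The edge ab of each copy gives the star edge c v_i.) *)
Definition G1_adj : rel G1V := fun u v =>
  [exists i : 'I_4, exists j : 'I_9,
     has (fun pq : nat * nat =>
            ((G1_lift i j pq.1 == u) && (G1_lift i j pq.2 == v)) ||
            ((G1_lift i j pq.1 == v) && (G1_lift i j pq.2 == u)))
         J3_edges].

(* Main.v *)
Require Import Defs.
From mathcomp Require Import all_boot zify.
Set Implicit Arguments. Unset Strict Implicit. Unset Printing Implicit Defensive.

Definition INT : seq (nat * nat) :=
  [:: (2,3);(3,4);(4,5);(5,6);(7,3);(7,4);(8,4);(8,5);(9,3);(9,4);(10,4);(10,5)].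

Definition resid (w : seq bool) (pq : nat * nat) : bool :=
  if pq \in INT then ~~ nth false w (index pq INT) else true.

Definition colJ (al be : nat) (s : seq nat) (p : nat) : nat :=
  if p == 0 then al else if p == 1 then be else nth 0 s (p - 2).

Fixpoint lall {T : Type} (f : T -> bool) (l : seq T) : bool :=
  match l with [::] => true | x :: l' => if f x then lall f l' else false end.
Fixpoint lhas {T : Type} (f : T -> bool) (l : seq T) : bool :=
  match l with [::] => false | x :: l' => if f x then true else lhas f l' end.
Lemma lallE T (f : T -> bool) l : lall f l = all f l.
Proof. by elim: l => //= x l ->; case: (f x). Qed.
Lemma lhasE T (f : T -> bool) l : lhas f l = has f l.
Proof. by elim: l => //= x l ->; case: (f x). Qed.

Definition conflict (R : seq (nat * nat)) al be (s : seq nat) : bool :=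
  lhas (fun pq => [&& pq.1 < 2 + size s, pq.2 < 2 + size s &
                     colJ al be s pq.1 == colJ al be s pq.2]) R.

Fixpoint search R al be (Ls : seq (seq nat)) (s : seq nat) : bool :=
  match Ls with
  | [::] => conflict R al be s
  | l :: Ls' => lall (fun c => if conflict R al be (rcons s c) then true else search R al be Ls' (rcons s c)) l
  end.

Definition ren (al be n : nat) : nat :=
  if n == 0 then al else if n == 1 then be else n.+1.

Definition pairs : seq (nat * nat) := [:: (0,1);(0,2);(1,0);(1,2);(2,0);(2,1)].

Definition fam : seq (seq (seq nat)) :=
  [:: [:: [:: 0;1;2]; [:: 0;1;2]; [:: 0;1;2]; [:: 0;1;2]; [:: 0;1;2];
          [:: 0;2;3]; [:: 0;2;3]; [:: 1;2;3]; [:: 1;2;3]];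
      [:: [:: 0;1;2]; [:: 0;1;2]; [:: 0;1;3]; [:: 0;1;2]; [:: 0;1;2];
          [:: 0;2;3]; [:: 0;2;3]; [:: 1;2;3]; [:: 1;2;3]]].

Definition mlists (p : nat * nat) (L : seq (seq nat)) := map (map (ren p.1 p.2)) L.

Definition good (w : seq bool) (L : seq (seq nat)) : bool :=
  (size L == 9) &&
  lall (fun p => if all (fun l => uniq l && (size l == 3)) (mlists p L) then
                search (filter (resid w) J3_edges) p.1 p.2 (mlists p L) [::] else false) pairs.

Definition atx (x : nat) (pq : nat * nat) := (pq.1 == x) || (pq.2 == x).

Definition degok (w : seq bool) : bool :=
  all (fun x => count (fun pq => atx x pq && nth false w (index pq INT)) INT <= 3) [:: 3;4;5].

Fixpoint allbools (n : nat) : seq (seq bool) :=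
  if n is n'.+1 then [seq b :: r | b <- [:: false; true], r <- allbools n'] else [:: [::]].

Lemma big_check : lall (fun w => if degok w then lhas (good w) fam else true) (allbools 12).
Proof. vm_compute. reflexivity. Qed.

Lemma conflict_cat R al be s u : conflict R al be s -> conflict R al be (s ++ u).
Proof.
rewrite /conflict !lhasE => /hasP [pq Hin /and3P [H1 H2 H3]].
apply/hasP; exists pq => //.
have colE p : p < 2 + size s -> colJ al be (s ++ u) p = colJ al be s p.
  rewrite /colJ; case: eqP => // /eqP p0; case: eqP => // /eqP p1 Hp.
  by rewrite nth_cat ifT //; lia.
rewrite size_cat colE // colE // H3 andbT.
apply/andP; split; lia.
Qed.

Lemma search_sound R al be Ls : forall s t, size t = size Ls ->
  (forall k, k < size Ls -> nth 0 t k \in nth [::] Ls k) ->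
  search R al be Ls s -> conflict R al be (s ++ t).
Proof.
elim: Ls => [|l Ls IH] s t /=.
  by move=> /size0nil -> _; rewrite cats0.
case: t => [|c t] //= [Hsz] Hmem.
rewrite lallE => /allP /(_ c (Hmem 0 erefl)).
rewrite -cat_rcons; case: ifP => [Hc _ | _ Hs].
  exact: conflict_cat.
apply: IH Hs => // k Hk; exact: (Hmem k.+1 Hk).
Qed.

Lemma mem_allbools n w : size w = n -> w \in allbools n.
Proof.
elim: n w => [|n IH] w; first by move/size0nil ->.
case: w => [|b w] // [Hs].
change (b :: w \in [seq b :: r | b <- [:: false; true], r <- allbools n]).
apply: (allpairs_f (fun b r => b :: r)); [by case: b | exact: IH].
Qed.

Lemma big_check' w : size w = 12 -> degok w -> has (good w) fam.
Proof.
move=> Hs Hd; have := big_check; rewrite lallE => /allP /(_ w (mem_allbools Hs)).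
by rewrite Hd lhasE.
Qed.

Lemma adj_lift i j pq : pq \in J3_edges -> G1_adj (G1_lift i j pq.1) (G1_lift i j pq.2).
Proof.
move=> Hpq; apply/existsP; exists i; apply/existsP; exists j.
by apply/hasP; exists pq => //; rewrite !eqxx.
Qed.

Lemma lift_inj i j p q : 2 <= p <= 10 -> 2 <= q <= 10 -> G1_lift i j p = G1_lift i j q -> p = q.
Proof.
move=> /andP [hp1 hp2] /andP [hq1 hq2].
rewrite /G1_lift.
have -> : (p == 0) = false by apply/negbTE; lia.
have -> : (p == 1) = false by apply/negbTE; lia.
have -> : (q == 0) = false by apply/negbTE; lia.
have -> : (q == 1) = false by apply/negbTE; lia.
case=> /(congr1 val) /=; rewrite !inordK; lia.
Qed.

Definition oth (x : nat) (pq : nat * nat) := if pq.1 == x then pq.2 else pq.1.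

Lemma degok_hv (h : rel G1V) i j :
  (forall x y, h x y = h y x) -> (forall x, #|[set y | h x y]| <= 3) ->
  degok [seq h (G1_lift i j pq.1) (G1_lift i j pq.2) | pq <- INT].
Proof.
move=> hsym hdeg.
have gen : forall x, uniq (map (oth x) (filter (atx x) INT)) ->
   all (fun y => 2 <= y <= 10) (map (oth x) (filter (atx x) INT)) ->
   count (fun pq => atx x pq && nth false [seq h (G1_lift i j pq.1) (G1_lift i j pq.2) | pq <- INT] (index pq INT)) INT <= 3.
  move=> x Hu Hr.
  rewrite (@eq_in_count _ _ (fun pq => atx x pq && h (G1_lift i j pq.1) (G1_lift i j pq.2))); last first.
    by move=> pq Hpq; rewrite (nth_map (0,0)) ?index_mem // nth_index.
  rewrite -size_filter.
  set S := filter _ INT.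
  have HS : subseq S (filter (atx x) INT).
    have -> : S = filter (fun pq => h (G1_lift i j pq.1) (G1_lift i j pq.2)) (filter (atx x) INT).
      by rewrite -filter_predI; apply: eq_filter => pq /=; rewrite andbC.
    exact: filter_subseq.
  have HmS : subseq (map (oth x) S) (map (oth x) (filter (atx x) INT)) by exact: map_subseq.
  have U : uniq (map (G1_lift i j) (map (oth x) S)).
    rewrite map_inj_in_uniq; first exact: subseq_uniq HmS Hu.
    move=> y1 y2 H1 H2; apply: lift_inj.
    - by move/allP: Hr; apply; apply: (mem_subseq HmS).
    - by move/allP: Hr; apply; apply: (mem_subseq HmS).
  have Sub : {subset map (G1_lift i j) (map (oth x) S) <= enum [set y | h (G1_lift i j x) y]}.
    move=> y /mapP [z /mapP [pq Hpq ->] ->].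
    rewrite mem_enum inE.
    move: Hpq; rewrite mem_filter => /andP [/andP [Ha Hh] _].
    rewrite /oth; case: eqP => [<- // | Hne].
    move: Ha; rewrite /atx; case: eqP => // _ /= /eqP <-.
    by rewrite hsym.
  have := uniq_leq_size U Sub.
  rewrite !size_map -cardE => H.
  exact: leq_trans H (hdeg _).
rewrite /degok; apply/allP => x; rewrite !inE => /or3P [] /eqP -> ; apply: gen; exact: erefl.
Qed.

Definition extP (pq : nat * nat) :=
  ((pq.1 <= 1) && (1 <= pq.2 <= 10) && (pq.1 != pq.2)) ||
  ((pq.2 <= 1) && (1 <= pq.1 <= 10) && (pq.1 != pq.2)).

Lemma J3_split : all (fun pq => (pq \in INT) || extP pq) J3_edges.
Proof. exact: erefl. Qed.

Lemma J3_bound : all (fun pq => (pq.1 < 11) && (pq.2 < 11)) J3_edges.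
Proof. exact: erefl. Qed.

Definition idx (y : G1V) : option 'I_4 := if y is Some (i', _) then Some i' else None.
Definition cidx (y : G1V) : option 'I_9 :=
  if y is Some (_, Some (j, _)) then Some j else None.

Lemma pick_i (h : rel G1V) : (forall x, #|[set y | h x y]| <= 3) ->
  exists i : 'I_4, forall y, idx y = Some i -> ~~ h None y.
Proof.
move=> hdeg.
have : [exists i : 'I_4, [forall y, (idx y == Some i) ==> ~~ h None y]].
  apply/contraT => /existsPn Hn.
  have Hsub : [set Some i | i : 'I_4] \subset idx @: [set y | h None y].
    apply/subsetP => _ /imsetP [i _ ->].
    have /forallPn [y] := Hn i.
    rewrite negb_imply negbK => /andP [/eqP <- hy].
    by apply: imset_f; rewrite inE.
  have := subset_leq_card Hsub.
  rewrite (card_imset _ (@Some_inj _)).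
  rewrite card_ord => H4.
  have := leq_trans H4 (leq_imset_card idx _).
  have := hdeg None. lia.
move=> /existsP [i /forallP Hi]; exists i => y Hy.
by move: (Hi y); rewrite Hy eqxx.
Qed.

Lemma many_good (h : rel G1V) (i : 'I_4) : (forall x, #|[set y | h x y]| <= 3) ->
  6 <= #|[set j : 'I_9 | [forall x : 'I_9, ~~ h (Some (i, None)) (Some (i, Some (j, x)))]]|.
Proof.
move=> hdeg.
set G := [set j : 'I_9 | _].
have Hsub : [set Some j | j in ~: G] \subset cidx @: [set y | h (Some (i, None)) y].
  apply/subsetP => _ /imsetP [j Hj ->].
  move: Hj; rewrite !inE => /forallPn [x]; rewrite negbK => hx.
  by apply: (@imset_f _ _ cidx _ (Some (i, Some (j, x)))); rewrite inE.
have := subset_leq_card Hsub.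
rewrite card_imset; last by move=> a b [].
move=> H1.
have := leq_trans H1 (leq_imset_card cidx _).
have := hdeg (Some (i, None)).
have := cardsC G. rewrite card_ord. lia.
Qed.

Lemma key_ext (h : rel G1V) (i : 'I_4) (j : 'I_9) :
  (forall y, idx y = Some i -> ~~ h None y) ->
  (forall x : 'I_9, ~~ h (Some (i, None)) (Some (i, Some (j, x)))) ->
  forall p q, p <= 1 -> 1 <= q <= 10 -> p != q -> ~~ h (G1_lift i j p) (G1_lift i j q).
Proof.
move=> Hi Hj p q Hp /andP [Hq1 Hq2] Hpq.
case: p Hp Hpq => [|[|p]] // Hp Hpq.
- apply: Hi; rewrite /G1_lift.
  have -> : (q == 0) = false by apply/negbTE; lia.
  by case: (q == 1).
- rewrite /G1_lift /=.
  have -> : (q == 0) = false by apply/negbTE; lia.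
  have -> : (q == 1) = false by apply/negbTE; lia.
  exact: Hj.
Qed.

Lemma colJ_lift (col : G1V -> nat) i j p : p < 11 ->
  colJ (col None) (col (Some (i, None)))
       [seq col (Some (i, Some (j, inord x))) | x <- iota 0 9] p = col (G1_lift i j p).
Proof.
move=> Hp; rewrite /colJ /G1_lift; case: eqP => // /eqP p0; case: eqP => // /eqP p1.
rewrite (nth_map 0) ?size_iota; last lia.
by rewrite nth_iota; last lia.
Qed.

Definition Fl (w : seq bool) : seq (seq nat) := locked (nth [::] fam (find (good w) fam)).

Lemma HFl w : size w = 12 -> degok w -> good w (Fl w).
Proof. by move=> Hs Hd; rewrite /Fl -lock; apply: nth_find; apply: big_check'. Qed.

Lemma conflict_ex R al be s : conflict R al be s ->
  exists2 pq, pq \in R & colJ al be s pq.1 = colJ al be s pq.2.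
Proof. by rewrite /conflict lhasE => /hasP [pq H /and3P [_ _ /eqP E]]; exists pq. Qed.

Theorem theorem5 :
  forall h : rel G1V,
    subgraph_maxdeg G1_adj h 3 ->
    ~ choosable (del_edges G1_adj h) 3.
Proof.
move=> h [hsym [hsub hdeg]] Hch.
have [i Hi] := pick_i hdeg.
have HG := many_good i hdeg.
set G := [set j : 'I_9 | _] in HG.
pose s := enum G.
have Hs : 6 <= size s by rewrite /s -cardE.
pose hv (j : 'I_9) := [seq h (G1_lift i j pq.1) (G1_lift i j pq.2) | pq <- INT].
have HF : forall j, good (hv j) (Fl (hv j)).
  move=> j; apply: HFl; first by rewrite size_map.
  exact: degok_hv.
pose L : G1V -> seq nat := fun y =>
  match y with
  | Some (i', Some (j, x)) =>
      if (i' == i) && (index j s < 6)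
      then nth [::] (mlists (nth (0,0) pairs (index j s)) (Fl (hv j))) x
      else [:: 0; 1; 2]
  | _ => [:: 0; 1; 2]
  end.
have HL : forall y, uniq (L y) /\ size (L y) = 3.
  case=> [[i' [[j x]|]]|] //=.
  case: ifP => // /andP [_ Hk].
  have /andP [/eqP HFs] := HF j.
  rewrite lallE => /allP /(_ _ (mem_nth (0,0) (Hk : index j s < size pairs))).
  case: ifP => // /allP Hall _.
  have /Hall /andP [-> /eqP ->] // : nth [::] (mlists (nth (0, 0) pairs (index j s)) (Fl (hv j))) x
       \in mlists (nth (0, 0) pairs (index j s)) (Fl (hv j)).
  by apply: mem_nth; rewrite size_map HFs.
have [col [Hin Hpr]] := Hch L HL.
set al := col None.
set be := col (Some (i, None)).
have Hal : al \in [:: 0; 1; 2] := Hin None.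
have Hbe : be \in [:: 0; 1; 2] := Hin (Some (i, None)).
have Hne : al != be.
  apply: (Hpr None (Some (i, None))).
  rewrite /del_edges (Hi (Some (i, None))) // andbT.
  exact: (adj_lift i ord0 (pq := (0,1))).
have Hp : (al, be) \in pairs.
  move: Hal Hbe Hne; rewrite !inE.
  by case/or3P => /eqP ->; case/or3P => /eqP ->.
set k := index (al, be) pairs.
have Hk : k < 6 by rewrite /k -[6]/(size pairs) index_mem.
have Hnk : nth (0,0) pairs k = (al, be) by rewrite nth_index.
set j := nth ord0 s k.
have Hks : k < size s := leq_trans Hk Hs.
have Hjs : j \in s by apply: mem_nth.
have Hidx : index j s = k by rewrite index_uniq ?enum_uniq.
have HjG : j \in G by rewrite -mem_enum.
have Hj : forall x : 'I_9, ~~ h (Some (i, None)) (Some (i, Some (j, x))).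
  by move: HjG; rewrite inE => /forallP.
set w := hv j.
have /andP [/eqP HFs] := HF j.
rewrite lallE => /allP /(_ _ Hp).
case: ifP => // _.
set ML := mlists (al, be) (Fl w).
set R := filter (resid w) J3_edges.
move=> Hsearch.
set t := [seq col (Some (i, Some (j, inord x))) | x <- iota 0 9].
have Hc : conflict R al be t.
  rewrite -[t]cat0s; apply: (search_sound (Ls := ML)) Hsearch.
    by rewrite /t /ML !size_map size_iota HFs.
  move=> x; rewrite /ML size_map HFs => Hx.
  rewrite /t (nth_map 0) ?size_iota // nth_iota // add0n.
  have := Hin (Some (i, Some (j, inord x))).
  by rewrite /L eqxx Hidx Hk Hnk inordK.
have [[p q] HpR Heq] := conflict_ex Hc.
move: HpR; rewrite mem_filter => /andP [Hres HJ].
have /andP [Hp11 Hq11] := allP J3_bound _ HJ.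
move: Heq; rewrite !colJ_lift //= => Heq.
have Hnh : ~~ h (G1_lift i j p) (G1_lift i j q).
  move: Hres; rewrite /resid; case: ifP => Hint.
    by rewrite /w /hv (nth_map (0,0)) ?index_mem // nth_index.
  move=> _.
  have := allP J3_split _ HJ; rewrite Hint /= /extP /= => /orP [/andP [/andP [H1 H2] H3] | /andP [/andP [H1 H2] H3]].
    exact: key_ext.
  rewrite hsym; apply: key_ext => //; by rewrite eq_sym.
have := Hpr (G1_lift i j p) (G1_lift i j q).
rewrite /del_edges Hnh andbT (adj_lift i j (pq := (p, q))) // Heq eqxx.
by move=> /(_ isT).
Qed.
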